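(* Let $\varphi_1,\varphi_2\colon\mathbb{R}^n\to\overline{\mathbb{R}}$ be proper nearly convex functions. If $\mathrm{ri}(\mathrm{dom}\,\varphi_1)\cap\mathrm{ri}(\mathrm{dom}\,\varphi_2)\neq \emptyset$, then $$\partial(\varphi_1+\varphi_2)(\bar x)=\partial\varphi_1 (\bar x)+\partial\varphi_2 (\bar x)$$ for all $\bar x\in \mathrm{dom}\,\varphi_1\cap\mathrm{dom}\,\varphi_2$.
   Context: $\overline{\mathbb{R}}=[-\infty,\infty]$; proper means nonempty domain $\mathrm{dom}\,\varphi=\{x\mid\varphi(x)<\infty\}$ and never $-\infty$. A set $D$ is nearly convex if there is a convex $E$ with $E\subset D\subset\overline{E}$; a function is nearly convex if its epigraph is nearly convex. $\mathrm{ri}\,D=\{a\in D\mid\exists\delta>0,\ B(a;\delta)\cap\mathrm{aff}\,D\subset D\}$. For $\bar x\in\mathrm{dom}\,\psi$, $\partial\psi(\bar x)=\{\xi\in\mathbb{R}^n\mid\langle\xi,x-\bar x\rangle\le\psi(x)-\psi(\bar x)\ \forall x\in\mathbb{R}^n\}$. Sums of sets are Minkowski sums. *)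

(* Defs.v *)
From HB Require Import structures.
From mathcomp Require Import all_boot all_order all_algebra.
From mathcomp Require Import all_classical all_reals ereal.
Set Implicit Arguments. Unset Strict Implicit. Unset Printing Implicit Defensive.
Import Order.TTheory GRing.Theory Num.Theory.
Local Open Scope classical_set_scope.
Local Open Scope ring_scope.

Section Defs.
Variables (R : realType) (n : nat).
Local Notation V := 'rV[R]_n.

Definition dotv (u v : V) : R := \sum_(i < n) u 0 i * v 0 i.

Definition eball (a : V) (d : R) : set V :=
  [set x | dotv (x - a) (x - a) < d ^+ 2].

Definition dist2p (p q : V * R) : R :=
  dotv (p.1 - q.1) (p.1 - q.1) + (p.2 - q.2) ^+ 2.

Definition pclosure (E : set (V * R)) : set (V * R) :=
  [set p | forall e : R, 0 < e -> exists2 q, E q & dist2p p q < e ^+ 2].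

Definition pconvex (E : set (V * R)) : Prop :=
  forall p q, E p -> E q -> forall t : R, 0 <= t <= 1 ->
    E (t *: p.1 + (1 - t) *: q.1, t * p.2 + (1 - t) * q.2).

Definition nearly_convex_pset (D : set (V * R)) : Prop :=
  exists E, pconvex E /\ E `<=` D /\ D `<=` pclosure E.

Definition epi (phi : V -> \bar R) : set (V * R) :=
  [set p | (phi p.1 <= p.2%:E)%E].

Definition nearly_convex_fun (phi : V -> \bar R) : Prop :=
  nearly_convex_pset (epi phi).

Definition dom (phi : V -> \bar R) : set V := [set x | (phi x < +oo)%E].

Definition proper_fun (phi : V -> \bar R) : Prop :=
  dom phi !=set0 /\ (forall x, phi x <> -oo%E).

Definition aff (D : set V) : set V :=
  [set a | exists m (p : 'I_m -> V) (w : 'I_m -> R),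
     (forall i, D (p i)) /\ \sum_(i < m) w i = 1 /\ a = \sum_(i < m) w i *: p i].

Definition ri (D : set V) : set V :=
  [set a | D a /\ exists2 d : R, 0 < d & eball a d `&` aff D `<=` D].

Definition subdiff (psi : V -> \bar R) (xb : V) : set V :=
  [set xi | dom psi xb /\
     forall x, ((dotv xi (x - xb))%:E <= psi x - psi xb)%E].

Definition msum (A B : set V) : set V :=
  [set z | exists a b, A a /\ B b /\ z = a + b].

End Defs.

(* Main.v *)
Require Import Defs.
From mathcomp Require Import all_boot all_order all_algebra.
From mathcomp Require Import all_classical all_reals ereal.
From mathcomp Require Import ring lra zify.
Set Implicit Arguments. Unset Strict Implicit. Unset Printing Implicit Defensive.
Import Order.TTheory GRing.Theory Num.Theory.
Local Open Scope classical_set_scope.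
Local Open Scope ring_scope.


Section Basics.
Variables (R : realType) (n : nat).
Local Notation V := 'rV[R]_n.
Local Notation dv := (@dotv R n).

Lemma dotvC (u v : V) : dv u v = dv v u.
Proof. by rewrite /dotv; apply: eq_bigr => i _; rewrite mulrC. Qed.

Lemma dotvDr (u x y : V) : dv u (x + y) = dv u x + dv u y.
Proof. by rewrite /dotv -big_split; apply: eq_bigr => i _; rewrite mxE mulrDr. Qed.

Lemma dotvDl (u x y : V) : dv (x + y) u = dv x u + dv y u.
Proof. by rewrite dotvC dotvDr !(dotvC u). Qed.

Lemma dotvZr (u x : V) c : dv u (c *: x) = c * dv u x.
Proof. by rewrite /dotv mulr_sumr; apply: eq_bigr => i _; rewrite mxE mulrCA. Qed.

Lemma dotvZl (u x : V) c : dv (c *: x) u = c * dv x u.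
Proof. by rewrite dotvC dotvZr dotvC. Qed.

Lemma dotvNr (u x : V) : dv u (- x) = - dv u x.
Proof. by rewrite -scaleN1r dotvZr mulN1r. Qed.

Lemma dotvNl (u x : V) : dv (- x) u = - dv x u.
Proof. by rewrite dotvC dotvNr dotvC. Qed.

Lemma dotvBr (u x y : V) : dv u (x - y) = dv u x - dv u y.
Proof. by rewrite dotvDr dotvNr. Qed.

Lemma dotvBl (u x y : V) : dv (x - y) u = dv x u - dv y u.
Proof. by rewrite dotvDl dotvNl. Qed.

Lemma dotv0r (u : V) : dv u 0 = 0.
Proof. by rewrite /dotv big1 // => i _; rewrite mxE mulr0. Qed.

Lemma dotv0l (u : V) : dv 0 u = 0.
Proof. by rewrite dotvC dotv0r. Qed.

Lemma dotv_ge0 (x : V) : 0 <= dv x x.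
Proof. by rewrite /dotv; apply: sumr_ge0 => i _; rewrite -expr2 sqr_ge0. Qed.

Lemma coord_le (x : V) i : x 0 i ^+ 2 <= dv x x.
Proof.
rewrite /dotv (bigD1 i) //= -expr2 lerDl; apply: sumr_ge0 => j _.
by rewrite -expr2 sqr_ge0.
Qed.

Lemma coord_lt (x : V) e i : 0 < e -> dv x x < e ^+ 2 -> `|x 0 i| < e.
Proof.
move=> e0 h; have := le_lt_trans (coord_le x i) h => h2.
by rewrite ltr_norml; apply/andP; split; nra.
Qed.

Lemma dotv_add2 (a b : V) : dv (a + b) (a + b) <= 2 * dv a a + 2 * dv b b.
Proof.
rewrite /dotv !mulr_sumr -big_split /=; apply: ler_sum => i _.
rewrite !mxE; set x := a 0 i; set y := b 0 i.
have h : 0 <= (x - y) ^+ 2 by apply: sqr_ge0.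
rewrite -!expr2 -subr_ge0; apply: le_trans h _; rewrite le_eqVlt; apply/orP; left; apply/eqP.
rewrite !expr2; ring.
Qed.

Lemma dotvZZ (a : V) c : dv (c *: a) (c *: a) = c ^+ 2 * dv a a.
Proof. by rewrite dotvZl dotvZr mulrA expr2. Qed.


Definition vconvex (P : set V) := forall a b, P a -> P b ->
  forall t : R, 0 <= t <= 1 -> P (t *: a + (1 - t) *: b).

Lemma conv_comb (P : set V) : vconvex P -> forall p0, P p0 ->
  forall k (q : 'I_k -> V) (w : 'I_k -> R), (forall i, P (q i)) ->
  (forall i, 0 <= w i) -> \sum_i w i <= 1 ->
  P (p0 + \sum_i w i *: (q i - p0)).
Proof.
move=> cP p0 Pp0; elim=> [|k IH] q w Pq w0 ws.
  by rewrite big_ord0 addr0.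
rewrite big_ord_recr /=; rewrite big_ord_recr /= in ws.
set wm := w ord_max in ws *.
have wm0 : 0 <= wm := w0 _.
have s0 : 0 <= \sum_(i < k) w (widen_ord (leqnSn k) i) by apply: sumr_ge0 => i _.
have [wm1|wm1] := eqVneq wm 1.
  have s00 : \sum_(i < k) w (widen_ord (leqnSn k) i) = 0.
    by apply/eqP; rewrite eq_le s0 andbT; move: ws; rewrite wm1; lra.
  have z := psumr_eq0P (fun i _ => w0 (widen_ord (leqnSn k) i)) s00.
  rewrite big1 ?add0r; last by move=> i _; rewrite z // scale0r.
  by rewrite wm1 scale1r addrC subrK.
have wlt : wm < 1 by rewrite lt_neqAle wm1 /=; move: ws; lra.
set m := 1 - wm.
have m0 : 0 < m by rewrite /m; lra.
pose w' := fun i : 'I_k => w (widen_ord (leqnSn k) i) / m.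
have Py' : P (p0 + \sum_i w' i *: (q (widen_ord (leqnSn k) i) - p0)).
  apply: IH => //.
  - by move=> i; rewrite /w'; apply: divr_ge0 => //; apply: ltW.
  - rewrite /w' -mulr_suml ler_pdivrMr // mul1r /m; lra.
have := cP _ _ Py' (Pq ord_max) m; rewrite /m.
have -> : 1 - (1 - wm) = wm by ring.
move=> /(_ _)/wrap[]; first by apply/andP; split; lra.
set S := (X in P (p0 + (X + _))).
suff -> : p0 + (S + wm *: (q ord_max - p0)) = (1 - wm) *: (p0 + \sum_(i < k) w' i *: (q (widen_ord (leqnSn k) i) - p0)) +
      wm *: q ord_max by [].
rewrite [(1 - wm) *: (_ + _)]scalerDr scaler_sumr.
have -> : \sum_(i < k) (1 - wm) *: (w' i *: (q (widen_ord (leqnSn k) i) - p0)) = S.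
  apply: eq_bigr => i _; rewrite scalerA /w' mulrC divfK //; exact: lt0r_neq0.
apply/rowP => j; rewrite !mxE; ring.
Qed.


Lemma aff_base (D : set V) z : D z -> aff D z.
Proof.
move=> Dz; exists 1%N, (fun _ => z), (fun _ => 1); split => //.
by rewrite !big_ord1 scale1r.
Qed.

Lemma aff_ext (D : set V) y c a : aff D y -> D c -> aff D (a *: y + (1 - a) *: c).
Proof.
case=> m [p [w [Dp [sw ->]]]] Dc.
have sl : forall j : 'I_m, fintype.split (lshift 1 j) = inl j := fun j => unsplitK (inl _).
have sr : forall j : 'I_1, fintype.split (rshift m j) = inr j := fun j => unsplitK (inr _).
exists (m + 1)%N, (fun i => match fintype.split i with inl j => p j | inr _ => c end),
  (fun i => match fintype.split i with inl j => a * w j | inr _ => 1 - a end).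
split; first by move=> i; case: (fintype.split i).
split.
  rewrite big_split_ord /= big_ord1 sr.
  under eq_bigr do rewrite sl.
  by rewrite -mulr_sumr sw mulr1 addrC subrK.
rewrite big_split_ord /= big_ord1 sr.
under [X in _ = X + _]eq_bigr do rewrite sl -scalerA.
by rewrite -scaler_sumr.
Qed.

Lemma aff_sub (D : set V) y m (B : 'M[R]_(m, n)) p0 :
  aff D y -> (forall x, D x -> (x - p0 <= B)%MS) -> (y - p0 <= B)%MS.
Proof.
case=> k [p [w [Dp [sw ->]]]] h.
have -> : \sum_(i < k) w i *: p i - p0 = \sum_(i < k) w i *: (p i - p0).
  rewrite [RHS](eq_bigr (fun i => w i *: p i - w i *: p0)); last by move=> i _; rewrite scalerBr.
  by rewrite sumrB -scaler_suml sw scale1r.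
by apply: summx_sub => i _; apply: scalemx_sub; apply: h.
Qed.

Lemma sum_bound k (x c : 'I_k -> R) e : (forall i, `|x i| <= e) ->
  `|\sum_i x i * c i| <= e * \sum_i `|c i|.
Proof.
move=> h; apply: le_trans (ler_norm_sum _ _ _) _; rewrite mulr_sumr.
apply: ler_sum => i _; rewrite normrM; apply: ler_wpM2r => //.
Qed.

Lemma mx_bound m (x : V) (M : 'M[R]_(n, m)) j e : 0 < e -> dv x x < e ^+ 2 ->
  `|(x *m M) 0 j| <= e * \sum_i `|M i j|.
Proof.
move=> e0 h; rewrite mxE; apply: sum_bound => i; apply: ltW; exact: coord_lt.
Qed.

Lemma dotv_bound (u x : V) e : 0 < e -> dv x x < e ^+ 2 ->
  `|dv u x| <= e * \sum_i `|u 0 i|.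
Proof.
move=> e0 h; rewrite dotvC /dotv; apply: sum_bound => i; apply: ltW; exact: coord_lt.
Qed.

End Basics.

Lemma sandwich (R : realType) (A B : set R) : A !=set0 -> B !=set0 ->
  (forall a b, A a -> B b -> a <= b) ->
  exists c, (forall a, A a -> a <= c) /\ (forall b, B b -> c <= b).
Proof.
move=> A0 [b0 Bb0] h; exists (sup A); split.
  by apply: sup_upper_bound; split => //; exists b0 => a Aa; apply: h.
by move=> b Bb; apply: ge_sup => // a Aa; apply: h.
Qed.


Section LemmaA.
Variables (R : realType) (n : nat).
Local Notation V := 'rV[R]_n.
Local Notation dv := (@dotv R n).
Variable C : set (V * R).
Hypothesis cC : pconvex C.
Hypothesis H0 : forall s, C (0, s) -> 0 <= s.
Hypothesis HQ : forall x s, C (x, s) -> exists e, 0 < e /\ exists s', C (- (e *: x), s').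

Definition goodW k (W : 'M[R]_(k, n)) (xi : V) :=
  forall x s, C (x, s) -> (x <= W)%MS -> dv xi x <= s.

Lemma ext_step k (W : 'M[R]_(k, n)) xi v s0 : goodW W xi -> C (v, s0) ->
  exists xi', goodW (W + v)%MS xi'.
Proof.
move=> gW Cv.
have [vW|vW] := boolP (v <= W)%MS.
  exists xi => x s Cx xWv; apply: gW => //; apply: submx_trans xWv _.
  by rewrite addsmx_sub submx_refl vW.
set K := cokermx W.
have [j hj] : exists j, (v *m K) 0 j != 0.
  apply/existsP; rewrite -negb_forall; apply: contra vW => /forallP h.
  rewrite submxE; apply/eqP/rowP => j; rewrite [RHS]mxE.
  exact/eqP/(h j).
set c0 := (v *m K) 0 j.
pose u : V := \row_i (K i j / c0).
have tuE : forall x : V, dv u x = (x *m K) 0 j / c0.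
  move=> x; rewrite /dotv mxE mulr_suml; apply: eq_bigr => i _.
  by rewrite mxE mulrC mulrA.
have tuv : dv u v = 1 by rewrite tuE divff.
have tuW : forall x : V, (x <= W)%MS -> dv u x = 0.
  by move=> x; rewrite submxE => /eqP xK; rewrite tuE xK mxE mul0r.
have dec : forall x : V, (x <= W + v)%MS -> (x - dv u x *: v <= W)%MS.
  move=> x /sub_addsmxP [[a b] /= ->].
  rewrite [b]mx11_scalar mul_scalar_mx dotvDr dotvZr tuv mulr1 tuW ?submxMl //.
  by rewrite add0r addrK submxMl.
pose Up := fun r => exists x s, [/\ C (x, s), (x <= W + v)%MS, 0 < dv u x &
   r = (s - dv xi x) / dv u x].
pose Lo := fun r => exists x s, [/\ C (x, s), (x <= W + v)%MS, dv u x < 0 &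
   r = (s - dv xi x) / dv u x].
have [c [cLo cUp]] : exists c, (forall a, Lo a -> a <= c) /\ (forall b, Up b -> c <= b).
  apply: sandwich.
  - have [e [e0 [s' Cs']]] := HQ Cv.
    exists ((s' - dv xi (- (e *: v))) / dv u (- (e *: v))), (- (e *: v)), s'.
    split => //; first by rewrite -scaleNr scalemx_sub // addsmxSr.
    by rewrite dotvNr dotvZr tuv mulr1 oppr_lt0.
  - exists ((s0 - dv xi v) / dv u v), v, s0; split => //; first by rewrite addsmxSr.
    by rewrite tuv.
  move=> a b [x2 [s2 [C2 W2 t2 ->]]] [x1 [s1 [C1 W1 t1 ->]]].
  set T1 := dv u x1 in t1 *; set T2 := dv u x2 in t2 *.
  set al := - T2 / (T1 - T2).
  have T12 : 0 < T1 - T2 by lra.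
  have al01 : 0 <= al <= 1.
    rewrite /al; apply/andP; split; first by apply: divr_ge0; lra.
    by rewrite ler_pdivrMr // mul1r; lra.
  have := cC C1 C2 al01 => /= Cx.
  set x := al *: x1 + (1 - al) *: x2 in Cx.
  have tx : dv u x = 0.
    rewrite dotvDr !dotvZr -/T1 -/T2 /al; field; lra.
  have xW : (x <= W)%MS.
    have := dec x; rewrite tx scale0r subr0; apply.
    by apply: addmx_sub; apply: scalemx_sub.
  have := gW _ _ Cx xW; rewrite dotvDr !dotvZr => key.
  set q1 := (s1 - dv xi x1) / T1; set q2 := (s2 - dv xi x2) / T2.
  have e1 : s1 - dv xi x1 = q1 * T1 by rewrite /q1 divfK // lt0r_neq0.
  have e2 : s2 - dv xi x2 = q2 * T2 by rewrite /q2 divfK // ltr0_neq0.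
  have key2 : 0 <= al * (q1 * T1) + (1 - al) * (q2 * T2) by rewrite -e1 -e2; lra.
  have key3 : 0 <= (T1 * T2) * (q2 - q1) / (T1 - T2).
    move: key2; rewrite /al.
    have -> : - T2 / (T1 - T2) * (q1 * T1) + (1 - - T2 / (T1 - T2)) * (q2 * T2)
       = (T1 * T2) * (q2 - q1) / (T1 - T2) by field; lra.
    done.
  have : 0 <= (T1 * T2) * (q2 - q1) by move: key3; rewrite pmulr_lge0 ?invr_gt0.
  rewrite nmulr_rge0; first by lra.
  by rewrite pmulr_rlt0.
exists (xi + c *: u) => x s Cx xWv.
rewrite dotvDl dotvZl.
have [tp|tn|t0] := ltgtP (dv u x) 0.
- have := cLo _ (ex_intro _ x (ex_intro _ s (And4 Cx xWv tp erefl))).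
  set q := (s - dv xi x) / dv u x => cq.
  have e : s - dv xi x = q * dv u x by rewrite /q divfK // ltr0_neq0.
  nra.
- have := cUp _ (ex_intro _ x (ex_intro _ s (And4 Cx xWv tn erefl))).
  set q := (s - dv xi x) / dv u x => cq.
  have e : s - dv xi x = q * dv u x by rewrite /q divfK // lt0r_neq0.
  nra.
- rewrite t0 mulr0 addr0; apply: gW => //.
  by have := dec x xWv; rewrite t0 scale0r subr0.
Qed.


Lemma rank_inc k (W : 'M[R]_(k, n)) (x : V) : ~~ (x <= W)%MS ->
  (\rank W < \rank (W + x)%MS)%N.
Proof.
move=> xW; have : (W < W + x)%MS by rewrite ltmxE addsmxSl /= addsmx_sub submx_refl.
by rewrite ltmxErank => /andP[].
Qed.

Lemma lemmaA_ind d : forall k (W : 'M[R]_(k, n)) xi, goodW W xi ->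
  (n - \rank W <= d)%N -> exists xi', forall x s, C (x, s) -> dv xi' x <= s.
Proof.
elim: d => [|d IH] k W xi gW hd.
  exists xi => x s Cx; apply: gW => //.
  apply/negPn/negP => xW.
  have := rank_inc xW; have := rank_leq_col (W + x)%MS; lia.
have [[x [s [Cx xW]]]|nex] := pselect (exists x s, C (x, s) /\ ~~ (x <= W)%MS); last first.
  exists xi => x s Cx; apply: gW => //; apply/negPn/negP => xW.
  by apply: nex; exists x, s.
have [xi' g'] := ext_step gW Cx.
apply: IH g' _.
have := rank_inc xW; have := rank_leq_col (W + x)%MS; lia.
Qed.

Lemma lemmaA : exists xi, forall x s, C (x, s) -> dv xi x <= s.
Proof.
apply: (@lemmaA_ind n 0 0 0); last by rewrite leq_subr.
move=> x s Cx /submx0null xe; subst x; rewrite dotv0r; exact: H0.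
Qed.

End LemmaA.


Section R0.
Variables (R : realType) (n : nat).
Local Notation V := 'rV[R]_n.
Local Notation dv := (@dotv R n).

Definition famB k (p : 'I_k -> V) (p0 : V) : 'M[R]_(k, n) :=
  \matrix_(i, j) (p i - p0) 0 j.

Lemma row_famB k (p : 'I_k -> V) p0 i : row i (famB p p0) = p i - p0.
Proof. by apply/rowP => j; rewrite !mxE. Qed.

Lemma fam_ext (P : set V) k (p : 'I_k -> V) p0 q : (forall i, P (p i)) -> P q ->
  ~~ (q - p0 <= famB p p0)%MS ->
  exists p' : 'I_(k + 1) -> V, (forall i, P (p' i)) /\
  (\rank (famB p p0) < \rank (famB p' p0))%N.
Proof.
move=> Pp Pq nq.
have sl : forall j : 'I_k, fintype.split (lshift 1 j) = inl j := fun j => unsplitK (inl _).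
have sr : forall j : 'I_1, fintype.split (rshift k j) = inr j := fun j => unsplitK (inr _).
pose p' := fun i : 'I_(k + 1) => match fintype.split i with inl j => p j | inr _ => q end.
exists p'; split.
  by move=> i; rewrite /p'; case: (fintype.split i).
set B' := famB p' p0.
have sB : (famB p p0 <= B')%MS.
  apply/row_subP => i; rewrite row_famB.
  have -> : p i - p0 = row (lshift 1 i) B' by rewrite /B' row_famB /p' sl.
  exact: row_sub.
have : (famB p p0 < B')%MS.
  rewrite ltmxE sB /=; apply: contra nq => h.
  apply: submx_trans h.
  have -> : q - p0 = row (rshift k ord0) B' by rewrite /B' row_famB /p' sr.
  exact: row_sub.
by rewrite ltmxErank => /andP[].
Qed.

Lemma fam_max (P : set V) p0 : forall d k (p : 'I_k -> V), (forall i, P (p i)) ->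
  (n - \rank (famB p p0) <= d)%N ->
  exists k (p : 'I_k -> V), (forall i, P (p i)) /\
     forall q, P q -> (q - p0 <= famB p p0)%MS.
Proof.
elim=> [|d IH] k p Pp hd.
  exists k, p; split => // q Pq; apply/negPn/negP => nq.
  have [p' [_ lt]] := fam_ext Pp Pq nq.
  have := rank_leq_col (famB p' p0); lia.
have [[q [Pq nq]]|nex] := pselect (exists q, P q /\ ~~ (q - p0 <= famB p p0)%MS); last first.
  exists k, p; split => // q Pq; apply/negPn/negP => nq.
  by apply: nex; exists q.
have [p' [hp' lt]] := fam_ext Pp Pq nq.
apply: (IH _ p') => //.
have := rank_leq_col (famB p' p0); lia.
Qed.

Lemma small_zero (a S : R) : 0 <= S -> (forall e, 0 < e -> `|a| <= e * S) -> a = 0.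
Proof.
move=> S0 h; apply/eqP/negPn/negP => a0.
have na : 0 < `|a| by rewrite normr_gt0.
have := h (`|a| / (S + 1)); rewrite divr_gt0 //; last by lra.
move=> /(_ isT); rewrite mulrAC ler_pdivlMr; last by lra.
nra.
Qed.

Lemma T_closed k (B : 'M[R]_(k, n)) (P : set V) p0 y :
  (forall q, P q -> (q - p0 <= B)%MS) ->
  (forall e, 0 < e -> exists q, P q /\ dv (y - q) (y - q) < e ^+ 2) ->
  (y - p0 <= B)%MS.
Proof.
move=> hP hy; rewrite submxE; apply/eqP/rowP => j; rewrite [RHS]mxE.
apply: (@small_zero _ (\sum_i `|cokermx B i j|)).
  by apply: sumr_ge0 => i _.
move=> e e0; have [q [Pq yq]] := hy e e0.
have -> : y - p0 = (y - q) + (q - p0) by rewrite addrA subrK.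
rewrite mulmxDl.
have /eqP -> : (q - p0) *m cokermx B == 0 by rewrite -submxE; apply: hP.
rewrite addr0; exact: mx_bound.
Qed.


Lemma simplex (P : set V) (cP : vconvex P) p0 (Pp0 : P p0) k (p : 'I_k -> V)
  (Pp : forall i, P (p i)) :
  exists c, [/\ P c, (c - p0 <= famB p p0)%MS & exists r, 0 < r /\
    forall y, (y - p0 <= famB p p0)%MS -> dv (y - c) (y - c) < r ^+ 2 -> P y].
Proof.
set B := famB p p0.
have rowB : forall i, (p i - p0 <= B)%MS by move=> i; rewrite -row_famB row_sub.
set K : R := (k.+1)%:R.
have K1 : 1 <= K by rewrite /K ler1n.
have kK : k%:R = K - 1 by rewrite /K -natr1 addrK.
set g := K^-1.
have g0 : 0 < g by rewrite invr_gt0; lra.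
have gK : g * K = 1 by rewrite mulVf //; apply: lt0r_neq0; lra.
set c := p0 + \sum_i g *: (p i - p0).
have cB : (c - p0 <= B)%MS.
  by rewrite /c addrC addKr; apply: summx_sub => i _; apply: scalemx_sub.
set M := \sum_i \sum_j `|pinvmx B j i|.
have M0 : 0 <= M by apply: sumr_ge0 => i _; apply: sumr_ge0.
set r := g / (K * (M + 1)).
have r0 : 0 < r by rewrite /r divr_gt0 //; apply: mulr_gt0; lra.
exists c; split => //.
  apply: conv_comb => // [i|]; first exact: ltW.
  rewrite sumr_const card_ord -mulr_natl kK.
  have -> : (K - 1) * g = 1 - g by rewrite mulrBl mulrC gK mul1r.
  lra.
exists r; split => // y yB yc.
have ycB : (y - c <= B)%MS.
  have -> : y - c = (y - p0) - (c - p0) by rewrite opprB addrA subrK.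
  by apply: addmx_sub => //; rewrite -scaleN1r; apply: scalemx_sub.
set a := (y - c) *m pinvmx B.
have ya : y - c = \sum_i a 0 i *: (p i - p0).
  rewrite -(mulmxKpV ycB) -/a mulmx_sum_row.
  by apply: eq_bigr => i _; rewrite row_famB.
have abound : forall i, `|a 0 i| <= g / K.
  move=> i; apply: le_trans (mx_bound _ _ r0 yc) _.
  have : \sum_j `|pinvmx B j i| <= M.
    rewrite /M (bigD1 i) //= lerDl; apply: sumr_ge0 => l _; apply: sumr_ge0 => j _; exact: normr_ge0.
  move=> hMi.
  have Mi0 : 0 <= \sum_j `|pinvmx B j i| by apply: sumr_ge0.
  apply: (@le_trans _ _ (r * M)); first by apply: ler_wpM2l => //; exact: ltW.
  have K0 : K != 0 by apply: lt0r_neq0; lra.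
  have M10 : M + 1 != 0 by apply: lt0r_neq0; lra.
  rewrite /r mulrAC ler_pdivrMr; last by apply: mulr_gt0; lra.
  rewrite mulrA divfK //; nra.
have -> : y = p0 + \sum_i (g + a 0 i) *: (p i - p0).
  rewrite (eq_bigr (fun i => g *: (p i - p0) + a 0 i *: (p i - p0))); last first.
    by move=> i _; rewrite scalerDl.
  by rewrite big_split /= -ya addrA -/c addrC subrK.
apply: conv_comb => //.
  move=> i; have := abound i; rewrite ler_norml => /andP[h _].
  have : g / K <= g by rewrite ler_pdivrMr ?ler_peMr //; lra.
  move=> h2; set t := g / K in h h2 *; lra.
apply: le_trans (_ : \sum_(i < k) (g + g / K) <= 1).
  apply: ler_sum => i _; rewrite lerD2l; have := abound i; rewrite ler_norml.
  by case/andP.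
rewrite sumr_const card_ord -mulr_natl kK.
have -> : (K - 1) * (g + g / K) = 1 - g / K by rewrite /g; field; lra.
have : 0 <= g / K by apply: divr_ge0; lra.
set t := g / K; lra.
Qed.


Lemma subB_sub k (B : 'M[R]_(k, n)) (a b : V) : (a <= B)%MS -> (b <= B)%MS -> (a - b <= B)%MS.
Proof. by move=> ha hb; apply: addmx_sub => //; rewrite -scaleN1r; apply: scalemx_sub. Qed.

Lemma lemmaR0 (P Dm : set V) z d : vconvex P -> P `<=` Dm ->
  (forall x, Dm x -> forall e, 0 < e -> exists q, P q /\ dv (x - q) (x - q) < e ^+ 2) ->
  Dm z -> 0 < d -> eball z d `&` aff Dm `<=` Dm ->
  exists d', 0 < d' /\ forall y, aff Dm y -> dv (y - z) (y - z) < d' ^+ 2 -> P y.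
Proof.
move=> cP PD clos Dz d0 hball.
have [p0 [Pp0 _]] := clos z Dz 1 ltr01.
have [k [p [Pp hB]]] := @fam_max P p0 n 0 (fun _ => p0) (fun _ => Pp0) (leq_subr _ _).
set B := famB p p0 in hB.
have TD : forall x, Dm x -> (x - p0 <= B)%MS.
  by move=> x Dx; apply: (T_closed hB); apply: clos.
have TA : forall y, aff Dm y -> (y - p0 <= B)%MS by move=> y Ay; apply: aff_sub Ay TD.
have [c [Pc cB [r [r0 hr]]]] := simplex cP Pp0 Pp.
exists (d / 2); split; first by lra.
move=> y Ay yz.
set N := dv (y - c) (y - c).
have N0 : 0 <= N := dotv_ge0 _.
set eta := d / (2 * (N + 1)).
have eta0 : 0 < eta by rewrite /eta divr_gt0 //; lra.
have etaE : eta * (2 * (N + 1)) = d by rewrite /eta divfK //; apply: lt0r_neq0; lra.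
set w := (1 + eta) *: y + (1 - (1 + eta)) *: c.
have Aw : aff Dm w := aff_ext _ Ay (PD _ Pc).
have wz : dv (w - z) (w - z) < d ^+ 2.
  have -> : w - z = (y - z) + eta *: (y - c).
    by apply/rowP => j; rewrite !mxE; ring.
  apply: le_lt_trans (dotv_add2 _ _) _; rewrite dotvZZ -/N.
  have h1 : N <= (N + 1) ^+ 2 by nra.
  have h2 : eta ^+ 2 * N <= eta ^+ 2 * (N + 1) ^+ 2.
    by apply: ler_wpM2l => //; apply: sqr_ge0.
  have h3 : 4 * (eta ^+ 2 * (N + 1) ^+ 2) = d ^+ 2 by rewrite -etaE; ring.
  move: yz; rewrite expr_div_n => yz.
  have : dv (y - z) (y - z) < d ^+ 2 / 4 by move: yz; rewrite (_ : 2 ^+ 2 = 4) //; ring.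
  set Y := dv (y - z) (y - z); set E := eta ^+ 2 * N in h2 *; set F := eta ^+ 2 * (N + 1) ^+ 2 in h2 h3 *.
  move=> hY; set D2 := d ^+ 2 in h3 hY *.
  lra.
have Dw : Dm w by apply: hball; split.
have [w' [Pw' ww']] := clos w Dw (r * eta) (mulr_gt0 r0 eta0).
set c' := c + eta^-1 *: (w - w').
have Tc' : (c' - p0 <= B)%MS.
  have -> : c' - p0 = (c - p0) + eta^-1 *: ((w - p0) - (w' - p0)).
    by apply/rowP => j; rewrite !mxE; ring.
  apply: addmx_sub => //; apply: scalemx_sub; apply: subB_sub; [exact: TD | exact: TD (PD _ Pw')].
have c'c : dv (c' - c) (c' - c) < r ^+ 2.
  have -> : c' - c = eta^-1 *: (w - w') by rewrite /c' addrC addKr.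
  rewrite dotvZZ.
  have e2 : 0 < eta^-1 ^+ 2 by rewrite exprn_gt0 // invr_gt0.
  have h : eta^-1 ^+ 2 * dv (w - w') (w - w') < eta^-1 ^+ 2 * (r * eta) ^+ 2.
    by rewrite ltr_pM2l.
  apply: lt_le_trans h _.
  rewrite le_eqVlt; apply/orP; left; apply/eqP.
  rewrite -exprMn mulrCA mulVf ?mulr1 //; exact: lt0r_neq0.
have Pc' := hr c' Tc' c'c.
have l01 : 0 <= (1 + eta)^-1 <= 1.
  apply/andP; split; first by rewrite invr_ge0; lra.
  by rewrite invf_le1; lra.
have := cP _ _ Pw' Pc' _ l01.
suff -> : (1 + eta)^-1 *: w' + (1 - (1 + eta)^-1) *: c' = y by [].
have eta1 : 1 + eta != 0 by apply: lt0r_neq0; lra.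
have etan : eta != 0 by apply: lt0r_neq0.
apply/rowP => j; rewrite /c' /w !mxE; field.
by rewrite eta1 etan.
Qed.

End R0.


Section Final.
Variables (R : realType) (n : nat).
Local Notation V := 'rV[R]_n.
Local Notation dv := (@dotv R n).

Lemma fin_val (phi : V -> \bar R) x : proper_fun phi -> dom phi x ->
  phi x = (fine (phi x))%:E.
Proof.
move=> [_ hn]; rewrite /dom /=; have := hn x.
by case: (phi x) => [r| |] //=; rewrite ltxx.
Qed.

Lemma epi_dom (phi : V -> \bar R) x l : epi phi (x, l) -> dom phi x.
Proof. by rewrite /epi /dom /= => h; apply: le_lt_trans h _; apply: ltry. Qed.

Lemma lemmaR (phi : V -> \bar R) (E : set (V * R)) z :
  proper_fun phi -> pconvex E -> E `<=` epi phi -> epi phi `<=` pclosure E ->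
  ri (dom phi) z -> exists d', 0 < d' /\ forall y, aff (dom phi) y ->
    dv (y - z) (y - z) < d' ^+ 2 -> exists l, E (y, l).
Proof.
move=> pphi cE Ee eE [Dz [d d0 hd]].
apply: (@lemmaR0 _ _ (fun x => exists l, E (x, l)) (dom phi) z d) => //.
- move=> a b [la Ea] [lb Eb] t t01; exists (t * la + (1 - t) * lb).
  exact: (cE _ _ Ea Eb t t01).
- by move=> x [l /Ee]; apply: epi_dom.
move=> x Dx e e0.
have ex : epi phi (x, fine (phi x)) by rewrite /epi /= -fin_val.
have [q Eq hq] := eE _ ex e e0.
exists q.1; split; first by exists q.2; case: q Eq {hq}.
apply: le_lt_trans hq; rewrite /dist2p /= lerDl; exact: sqr_ge0.
Qed.


Lemma sum_sub (phi1 phi2 : V -> \bar R) xb :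
  proper_fun phi1 -> proper_fun phi2 -> dom phi1 xb -> dom phi2 xb ->
  msum (subdiff phi1 xb) (subdiff phi2 xb) `<=` subdiff (fun x => (phi1 x + phi2 x)%E) xb.
Proof.
move=> p1 p2 d1 d2 xi [a [b [[_ ha] [[_ hb] ->]]]].
have e1 := fin_val p1 d1; have e2 := fin_val p2 d2.
set a1 := fine (phi1 xb) in e1; set a2 := fine (phi2 xb) in e2.
split.
  by rewrite /dom /= e1 e2 /= ltry.
move=> x; have := ha x; have := hb x; rewrite e1 e2.
have := p1.2 x; have := p2.2 x.
case: (phi1 x) => [r1| |] //; case: (phi2 x) => [r2| |] //= _ _.
- rewrite !lee_fin dotvDl; lra.
- by move=> _ _; rewrite leey.
- by move=> _ _; rewrite leey.
- by move=> _ _; rewrite leey.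
Qed.


Lemma ge0_approx (F S : R) : 0 <= S -> (forall e, 0 < e -> - (e * S) <= F) -> 0 <= F.
Proof.
move=> S0 h; rewrite leNgt; apply/negP => F0.
set e := - F / (2 * (S + 1)).
have e0 : 0 < e by rewrite /e divr_gt0; lra.
have eE : e * (2 * (S + 1)) = - F by rewrite /e divfK //; apply: lt0r_neq0; lra.
have := h e e0; nra.
Qed.

Lemma dist2p_fst (p q : V * R) e : dist2p p q < e ^+ 2 -> dv (p.1 - q.1) (p.1 - q.1) < e ^+ 2.
Proof. by move=> h; apply: le_lt_trans h; rewrite /dist2p lerDl; exact: sqr_ge0. Qed.

Lemma dist2p_snd (p q : V * R) e : 0 < e -> dist2p p q < e ^+ 2 -> `|p.2 - q.2| < e.
Proof.
move=> e0 h; have : (p.2 - q.2) ^+ 2 < e ^+ 2.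
  by apply: le_lt_trans h; rewrite /dist2p lerDr; exact: dotv_ge0.
by move=> h2; rewrite ltr_norml; apply/andP; split; nra.
Qed.


Lemma sub_main (phi1 phi2 : V -> \bar R) xb :
  proper_fun phi1 -> proper_fun phi2 ->
  nearly_convex_fun phi1 -> nearly_convex_fun phi2 ->
  (ri (dom phi1) `&` ri (dom phi2)) !=set0 ->
  dom phi1 xb -> dom phi2 xb ->
  subdiff (fun x => (phi1 x + phi2 x)%E) xb `<=` msum (subdiff phi1 xb) (subdiff phi2 xb).
Proof.
move=> p1 p2 [E1 [cE1 [E1e e1E]]] [E2 [cE2 [E2e e2E]]] [z [rz1 rz2]] d1 d2 xi [_ hxi].
have e1 := fin_val p1 d1; have e2 := fin_val p2 d2.
set a1 := fine (phi1 xb) in e1; set a2 := fine (phi2 xb) in e2.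
have [r1 [r10 R1]] := lemmaR p1 cE1 E1e e1E rz1.
have [r2 [r20 R2]] := lemmaR p2 cE2 E2e e2E rz2.
have [dm [dm0 [dm1 dm2]]] : exists dm, 0 < dm /\ dm <= r1 /\ dm <= r2.
  by have [h|h] := leP r1 r2; [exists r1 | exists r2]; split => //; split => //; lra.
pose C := fun p : V * R => exists u l w m, [/\ E1 (u, l), E2 (w, m) &
  p = (u - w, l + m - a1 - a2 - dv xi (w - xb))].
have cC : pconvex C.
  move=> p q [u [l [w [m [Eul Ewm ->]]]]] [u' [l' [w' [m' [Eul' Ewm' ->]]]]] t t01 /=.
  exists (t *: u + (1 - t) *: u'), (t * l + (1 - t) * l'), (t *: w + (1 - t) *: w'),
    (t * m + (1 - t) * m').
  split.
  - exact: (cE1 _ _ Eul Eul' t t01).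
  - exact: (cE2 _ _ Ewm Ewm' t t01).
  - congr pair; first by apply/rowP => j; rewrite !mxE; ring.
    rewrite !dotvBr !dotvDr !dotvZr; ring.
have H0 : forall s, C (0, s) -> 0 <= s.
  move=> s [u [l [w [m [Eul Ewm [e0 es]]]]]].
  have uw : w = u by apply/eqP; rewrite eq_sym -subr_eq0 -e0.
  subst w s.
  have := hxi u; have := E1e _ Eul; have := E2e _ Ewm; rewrite /epi /= e1 e2.
  have := p1.2 u; have := p2.2 u.
  case: (phi1 u) => [x1| |] //; case: (phi2 u) => [x2| |] //= _ _.
  rewrite !lee_fin; lra.
have HQ : forall x s, C (x, s) -> exists e, 0 < e /\ exists s', C (- (e *: x), s').
  move=> x s [u [l [w [m [Eul Ewm [-> _]]]]]].
  set N := dv (z - u) (z - u) + dv (z - w) (z - w) + 1.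
  have Nu0 := dotv_ge0 (z - u); have Nw0 := dotv_ge0 (z - w).
  have N1 : 1 <= N by rewrite /N; lra.
  set e := dm / N.
  have e0 : 0 < e by rewrite /e divr_gt0 //; lra.
  have eN : e * N = dm by rewrite /e divfK //; apply: lt0r_neq0; lra.
  have small : forall X, 0 <= X -> X < N -> forall r, dm <= r -> e ^+ 2 * X < r ^+ 2.
    move=> X X0 XN r dmr.
    have h1 : e ^+ 2 * X < e ^+ 2 * N by rewrite ltr_pM2l // exprn_gt0.
    have h2 : e ^+ 2 * N <= e ^+ 2 * N ^+ 2.
      by rewrite ler_pM2l ?exprn_gt0 // expr2 ler_peMr //; lra.
    have h3 : e ^+ 2 * N ^+ 2 = dm ^+ 2 by rewrite -exprMn eN.
    have h4 : dm ^+ 2 <= r ^+ 2 by rewrite lerXn2r // ?nnegrE; lra.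
    lra.
  have Dz1 : dom phi1 z := rz1.1.
  have Dz2 : dom phi2 z := rz2.1.
  have Du : dom phi1 u := epi_dom (E1e _ Eul).
  have Dw : dom phi2 w := epi_dom (E2e _ Ewm).
  set y1 := (1 + e) *: z + (1 - (1 + e)) *: u.
  set y2 := (1 + e) *: z + (1 - (1 + e)) *: w.
  have [l1 El1] : exists l, E1 (y1, l).
    apply: R1; first exact: aff_ext (aff_base Dz1) Du.
    have -> : y1 - z = e *: (z - u) by apply/rowP => j; rewrite !mxE; ring.
    by rewrite dotvZZ; apply: small => //; rewrite /N; lra.
  have [l2 El2] : exists l, E2 (y2, l).
    apply: R2; first exact: aff_ext (aff_base Dz2) Dw.
    have -> : y2 - z = e *: (z - w) by apply/rowP => j; rewrite !mxE; ring.
    by rewrite dotvZZ; apply: small => //; rewrite /N; lra.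
  exists e; split => //; exists (l1 + l2 - a1 - a2 - dv xi (y2 - xb)), y1, l1, y2, l2.
  split => //; congr pair; apply/rowP => j; rewrite !mxE; ring.
have [xi1 hxi1] := lemmaA cC H0 HQ.
have transfer : forall u l w m, epi phi1 (u, l) -> epi phi2 (w, m) ->
    dv xi1 (u - w) <= l + m - a1 - a2 - dv xi (w - xb).
  move=> u l w m eul ewm; rewrite -subr_ge0.
  set S1 := \sum_i `|xi1 0 i|; set S2 := \sum_i `|xi 0 i|.
  have S10 : 0 <= S1 by apply: sumr_ge0.
  have S20 : 0 <= S2 by apply: sumr_ge0.
  apply: (@ge0_approx _ (2 + 2 * S1 + S2)); first by lra.
  move=> e e0.
  have [q1 Eq1 hq1] := e1E _ eul e e0.
  have [q2 Eq2 hq2] := e2E _ ewm e e0.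
  have key := hxi1 (q1.1 - q2.1) (q1.2 + q2.2 - a1 - a2 - dv xi (q2.1 - xb)).
  have {key} key : dv xi1 (q1.1 - q2.1) <= q1.2 + q2.2 - a1 - a2 - dv xi (q2.1 - xb).
    apply: key; exists q1.1, q1.2, q2.1, q2.2; split => //.
    - by case: q1 Eq1 {hq1}.
    - by case: q2 Eq2 {hq2}.
  have b1 := dotv_bound xi1 e0 (dist2p_fst hq1).
  have b2 := dotv_bound xi1 e0 (dist2p_fst hq2).
  have b3 := dotv_bound xi e0 (dist2p_fst hq2).
  have b4 := dist2p_snd e0 hq1.
  have b5 := dist2p_snd e0 hq2.
  rewrite /= -/S1 -/S2 in b1 b2 b3 b4 b5.
  have i1 : dv xi1 (u - w) = dv xi1 (q1.1 - q2.1) + dv xi1 (u - q1.1) - dv xi1 (w - q2.1).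
    by rewrite !dotvBr; ring.
  have i2 : dv xi (w - xb) = dv xi (q2.1 - xb) + dv xi (w - q2.1).
    by rewrite !dotvBr; ring.
  have -> : e * (2 + 2 * S1 + S2) = 2 * e + 2 * (e * S1) + e * S2 by ring.
  move: b1 b2 b3 b4 b5; rewrite !ler_norml !ltr_norml.
  move=> /andP[b1 b1'] /andP[b2 b2'] /andP[b3 b3'] /andP[b4 b4'] /andP[b5 b5'].
  rewrite i1 i2.
  set A1 := e * S1 in b1 b1' b2 b2' *; set A2 := e * S2 in b3 b3' *.
  lra.
exists xi1, (xi - xi1); split; last split; last by rewrite addrC subrK.
- split => // x; rewrite e1; have := p1.2 x.
  case E: (phi1 x) => [r| |] //= _; last by rewrite leey.
  rewrite lee_fin.
  have := transfer x r xb a2; rewrite /epi /= E e2 !lexx subrr dotv0r => /(_ isT isT).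
  lra.
- split => // x; rewrite e2; have := p2.2 x.
  case E: (phi2 x) => [r| |] //= _; last by rewrite leey.
  rewrite lee_fin.
  have := transfer xb a1 x r; rewrite /epi /= E e1 !lexx => /(_ isT isT).
  rewrite dotvBl.
  have -> : dv xi1 (xb - x) = - dv xi1 (x - xb) by rewrite -dotvNr opprB.
  lra.
Qed.



End Final.

Theorem mainTheorem4 (R : realType) (n : nat) (phi1 phi2 : 'rV[R]_n -> \bar R) :
  proper_fun phi1 -> proper_fun phi2 ->
  nearly_convex_fun phi1 -> nearly_convex_fun phi2 ->
  (ri (dom phi1) `&` ri (dom phi2)) !=set0 ->
  forall xb : 'rV[R]_n, dom phi1 xb -> dom phi2 xb ->
    subdiff (fun x => (phi1 x + phi2 x)%E) xb =
    msum (subdiff phi1 xb) (subdiff phi2 xb).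
Proof.
move=> p1 p2 nc1 nc2 hri xb d1 d2.
apply/seteqP; split.
  exact: sub_main.
exact: sum_sub.
Qed.
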